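(* Let $S$ be a functional PTS specification. If $\Gamma\models_S M:A$, $\Gamma\vdash_{\lambda S^*}M':A$ and $M\equiv_\beta M'$, then $\Gamma\models_S M':A$.
   Context: PTS: specification $S=(\mathcal S,\mathcal A,\mathcal R)$ (sorts, axioms $(s_1:s_2)$, rules $(s_1,s_2,s_3)$), functional meaning $\mathcal A,\mathcal R$ are functional relations; $\lambda S$ has terms $s\mid x\mid M\,N\mid\lambda x:A.M\mid\Pi x:A.B$ and the standard PTS typing rules (conversion modulo $\equiv_\beta$); $\mathrm{WF}_{\lambda S}(\Gamma)$ means $\Gamma$ is well formed. A top-sort is a sort $s$ with no $(s:s')\in\mathcal A$. The minimal completion $S^*$: sorts $\mathcal S\cup\{\tau\}$ ($\tau\notin\mathcal S$), axioms $\mathcal A\cup\{(s_1:\tau)\mid s_1$ a top-sort of $S\}$, rules $\mathcal R\cup\{(s_1,s_2,\tau)\mid s_1,s_2\in\mathcal S\cup\{\tau\}$, no $s_3$ with $(s_1,s_2,s_3)\in\mathcal R\}$. Reducibility predicate $\Gamma\models_S M:A$, defined by recursion: it holds iff $\mathrm{WF}_{\lambda S}(\Gamma)$, $\Gamma\vdash_{\lambda S^*}M:A$ and $\Gamma\vdash_{\lambda S^*}A:s$ for some sort $s$, and moreover: if $s\neq\tau$ or $A=s'$ for some $s'\in\mathcal S$, then there are $M',A'$ with $M\longrightarrow_\beta^*M'$, $A\longrightarrow_\beta^*A'$ and $\Gamma\vdash_{\lambda S}M':A'$; if $s=\tau$ and $A=\Pi x:B.C$, then for every $N$ with $\Gamma\models_S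 N:B$ we have $\Gamma\models_S M\,N:C[N/x]$. (These cases are exhaustive and the recursion is well founded.) *)

(* Defs.v *)
From Stdlib Require Import List Arith Relations.
Import ListNotations.

Set Implicit Arguments.

Inductive term (T : Type) : Type :=
  | Srt : T -> term T
  | Var : nat -> term T
  | App : term T -> term T -> term T
  | Lam : term T -> term T -> term T   (* Lam A M  =  \x:A. M *)
  | Pi  : term T -> term T -> term T.  (* Pi A B   =  Pi x:A. B *)

Arguments Srt {T} s.
Arguments Var {T} n.

Section Syntax.
Variable T : Type.

Fixpoint lift_rec (n k : nat) (t : term T) : term T :=
  match t with
  | Srt s => Srt s
  | Var i => if k <=? i then Var (i + n) else Var i
  | App u v => App (lift_rec n k u) (lift_rec n k v)
  | Lam A M => Lam (lift_rec n k A) (lift_rec n (S k) M)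
  | Pi A B => Pi (lift_rec n k A) (lift_rec n (S k) B)
  end.

Definition lift (n : nat) (t : term T) : term T := lift_rec n 0 t.

Fixpoint subst_rec (N t : term T) (k : nat) : term T :=
  match t with
  | Srt s => Srt s
  | Var i =>
      match Nat.compare i k with
      | Lt => Var i
      | Eq => lift k N
      | Gt => Var (pred i)
      end
  | App u v => App (subst_rec N u k) (subst_rec N v k)
  | Lam A M => Lam (subst_rec N A k) (subst_rec N M (S k))
  | Pi A B => Pi (subst_rec N A k) (subst_rec N B (S k))
  end.

(** [subst N t] is [t[N/x]] where [x] is variable 0. *)
Definition subst (N t : term T) : term T := subst_rec N t 0.

Inductive red1 : term T -> term T -> Prop :=
  | beta : forall A M N, red1 (App (Lam A M) N) (subst N M)
  | app_l : forall u u' v, red1 u u' -> red1 (App u v) (App u' v)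
  | app_r : forall u v v', red1 v v' -> red1 (App u v) (App u v')
  | lam_l : forall A A' M, red1 A A' -> red1 (Lam A M) (Lam A' M)
  | lam_r : forall A M M', red1 M M' -> red1 (Lam A M) (Lam A M')
  | pi_l : forall A A' B, red1 A A' -> red1 (Pi A B) (Pi A' B)
  | pi_r : forall A B B', red1 B B' -> red1 (Pi A B) (Pi A B').

Definition red : term T -> term T -> Prop := clos_refl_trans _ red1.

Definition conv : term T -> term T -> Prop := clos_refl_sym_trans _ red1.

(** Contexts are lists, the head being the most recent declaration
    (de Bruijn index 0). *)
Inductive typ (ax : T -> T -> Prop) (rl : T -> T -> T -> Prop)
  : list (term T) -> term T -> term T -> Prop :=
  | t_axiom : forall s1 s2, ax s1 s2 -> typ ax rl [] (Srt s1) (Srt s2)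
  | t_start : forall G A s,
      typ ax rl G A (Srt s) -> typ ax rl (A :: G) (Var 0) (lift 1 A)
  | t_weak : forall G M B C s,
      typ ax rl G M B -> typ ax rl G C (Srt s) ->
      typ ax rl (C :: G) (lift 1 M) (lift 1 B)
  | t_prod : forall G A B s1 s2 s3,
      typ ax rl G A (Srt s1) -> typ ax rl (A :: G) B (Srt s2) -> rl s1 s2 s3 ->
      typ ax rl G (Pi A B) (Srt s3)
  | t_app : forall G M N A B,
      typ ax rl G M (Pi A B) -> typ ax rl G N A ->
      typ ax rl G (App M N) (subst N B)
  | t_abs : forall G A M B s,
      typ ax rl (A :: G) M B -> typ ax rl G (Pi A B) (Srt s) ->
      typ ax rl G (Lam A M) (Pi A B)
  | t_conv : forall G M A B s,
      typ ax rl G M A -> typ ax rl G B (Srt s) -> conv A B ->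
      typ ax rl G M B.

Definition WF (ax : T -> T -> Prop) (rl : T -> T -> T -> Prop)
  (G : list (term T)) : Prop :=
  exists M A, typ ax rl G M A.

End Syntax.

Unset Implicit Arguments.

Record spec : Type := Spec {
  sorts : Type;
  axioms : sorts -> sorts -> Prop;
  rules : sorts -> sorts -> sorts -> Prop }.

Definition functional (S : spec) : Prop :=
  (forall s s1 s2, axioms S s s1 -> axioms S s s2 -> s1 = s2) /\
  (forall s1 s2 s3 s3', rules S s1 s2 s3 -> rules S s1 s2 s3' -> s3 = s3').

Definition top_sort (S : spec) (s : sorts S) : Prop :=
  ~ exists s', axioms S s s'.

(** The sorts of the minimal completion S^*: [option (sorts S)],
    [Some s] for [s] in S and [None] for the fresh sort tau. *)
Definition csort (S : spec) : Type := option (sorts S).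
Definition tau {S : spec} : csort S := None.

(** Terms of lambda S^* (terms of lambda S are those not mentioning tau). *)
Definition cterm (S : spec) : Type := term (csort S).

Definition axS (S : spec) (x y : csort S) : Prop :=
  match x, y with
  | Some a, Some b => axioms S a b
  | _, _ => False
  end.

Definition rlS (S : spec) (x y z : csort S) : Prop :=
  match x, y, z with
  | Some a, Some b, Some c => rules S a b c
  | _, _, _ => False
  end.

Definition axStar (S : spec) (x y : csort S) : Prop :=
  axS S x y \/ (y = tau /\ exists a, x = Some a /\ top_sort S a).

Definition rlStar (S : spec) (x y z : csort S) : Prop :=
  rlS S x y z \/ (z = tau /\ ~ exists c, rlS S x y (Some c)).

Definition typS (S : spec) := @typ (csort S) (axS S) (rlS S).
Definition typStar (S : spec) := @typ (csort S) (axStar S) (rlStar S).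
Definition WF_S (S : spec) := @WF (csort S) (axS S) (rlS S).

(** The defining (recursive) equation of the reducibility predicate
    [G |=_S M : A]. A predicate [P] satisfying it is the reducibility
    predicate (the recursion being well founded, it is unique). *)
Definition is_reducibility (S : spec)
  (P : list (cterm S) -> cterm S -> cterm S -> Prop) : Prop :=
  forall G M A,
    P G M A <->
    (WF_S S G /\ typStar S G M A /\
     exists s : csort S,
       typStar S G A (Srt s) /\
       ((s <> tau \/ exists s', A = Srt (Some s')) ->
          exists M' A', red M M' /\ red A A' /\ typS S G M' A') /\
       (s = tau -> forall B C, A = Pi B C ->
          forall N, P G N B -> P G (App M N) (subst N C))).

(* Main.v *)
Require Import Defs.
From Stdlib Require Import List Arith Relations Lia ClassicalEpsilon.
Import ListNotations.
Module MP1.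

Local Arguments Nat.leb : simpl never.

Ltac dest := repeat (match goal with
 | |- context [?a <=? ?b] => destruct (Nat.leb_spec a b)
 | |- context [Nat.compare ?a ?b] => destruct (Nat.compare_spec a b)
 end; simpl); try lia.

Section DB.
Variable T : Type.
Notation trm := (term T).

Lemma lift_rec0 : forall (M : trm) k, lift_rec 0 k M = M.
Proof.
  induction M; intros; simpl; try (rewrite ?IHM1, ?IHM2; reflexivity); auto.
  dest; f_equal; lia.
Qed.

Lemma simpl_lift_rec : forall (M : trm) n k p i,
  k <= i -> i <= k + n -> lift_rec p i (lift_rec n k M) = lift_rec (p + n) k M.
Proof.
  induction M; intros; simpl; auto.
  - dest; f_equal; lia.
  - rewrite IHM1, IHM2; auto.
  - rewrite IHM1, IHM2; auto; lia.
  - rewrite IHM1, IHM2; auto; lia.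
Qed.

Lemma permute_lift_rec : forall (M : trm) n k p i,
  i <= k -> lift_rec p i (lift_rec n k M) = lift_rec n (p + k) (lift_rec p i M).
Proof.
  induction M; intros; simpl; auto.
  - dest; f_equal; lia.
  - rewrite IHM1, IHM2; auto.
  - rewrite IHM1, IHM2; auto; [f_equal; f_equal; lia | lia].
  - rewrite IHM1, IHM2; auto; [f_equal; f_equal; lia | lia].
Qed.

Lemma simpl_subst : forall (N M : trm) n p k,
  k <= p -> p <= n + k -> subst_rec N (lift_rec (S n) k M) p = lift_rec n k M.
Proof.
  induction M; intros; simpl; auto.
  - dest; f_equal; lia.
  - rewrite IHM1, IHM2; auto.
  - rewrite IHM1, IHM2; auto; lia.
  - rewrite IHM1, IHM2; auto; lia.
Qed.

Lemma commute_lift_subst : forall (N M : trm) n p k,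
  k <= p -> lift_rec n k (subst_rec N M p) = subst_rec N (lift_rec n k M) (n + p).
Proof.
  induction M; intros; simpl; auto.
  - dest; try (f_equal; lia).
    subst. unfold lift. rewrite simpl_lift_rec by lia. f_equal; lia.
  - rewrite IHM1, IHM2; auto.
  - rewrite IHM1, IHM2; auto; [f_equal; f_equal; lia | lia].
  - rewrite IHM1, IHM2; auto; [f_equal; f_equal; lia | lia].
Qed.

Lemma lift_subst_gt : forall (N M : trm) n p k,
  p <= k -> lift_rec n k (subst_rec N M p) =
            subst_rec (lift_rec n (k - p) N) (lift_rec n (S k) M) p.
Proof.
  induction M; intros; simpl; auto.
  - dest; try (f_equal; lia).

    unfold lift. rewrite (permute_lift_rec N n0 (k-p) p 0) by lia.
    replace (p + (k - p)) with k by lia. auto.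
  - rewrite IHM1, IHM2; auto.
  - rewrite IHM1, IHM2 by lia; repeat f_equal; lia.
  - rewrite IHM1, IHM2 by lia; repeat f_equal; lia.
Qed.

Lemma distr_subst : forall (P N M : trm) k n,
  subst_rec P (subst_rec N M k) (k + n) =
  subst_rec (subst_rec P N n) (subst_rec P M (S (k + n))) k.
Proof.
  induction M; intros; simpl; auto.
  - dest; try (f_equal; lia).
    + subst. unfold lift. rewrite commute_lift_subst by lia. auto.
    + subst. unfold lift. rewrite simpl_subst by lia. auto.
  - rewrite IHM1, IHM2; auto.
  - rewrite IHM1. f_equal. replace (S (k + n)) with (S k + n) by lia. rewrite IHM2. auto.
  - rewrite IHM1. f_equal. replace (S (k + n)) with (S k + n) by lia. rewrite IHM2. auto.
Qed.

End DB.
Arguments lift_rec0 {T}. Arguments simpl_lift_rec {T}. Arguments permute_lift_rec {T}.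
Arguments simpl_subst {T}. Arguments commute_lift_subst {T}. Arguments lift_subst_gt {T}.
Arguments distr_subst {T}.
End MP1.
Import MP1.
Module MP2.
Set Implicit Arguments.

Section Red.
Variable T : Type.
Notation trm := (term T).
Notation red := (@red T).
Notation red1 := (@red1 T).
Notation conv := (@conv T).

Lemma subst0_lift : forall (N M : trm) n k,
  lift_rec n k (subst N M) = subst (lift_rec n k N) (lift_rec n (S k) M).
Proof. intros. unfold subst. rewrite lift_subst_gt by lia. rewrite Nat.sub_0_r. auto. Qed.

Lemma subst_subst0 : forall (P N M : trm) k,
  subst_rec P (subst N M) k = subst (subst_rec P N k) (subst_rec P M (S k)).
Proof. intros. unfold subst. apply (distr_subst P N M 0 k). Qed.

Lemma red1_lift : forall (M M' : trm), red1 M M' -> forall n k, red1 (lift_rec n k M) (lift_rec n k M').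
Proof.
  induction 1; intros; simpl; try (constructor; auto).
  rewrite subst0_lift. constructor.
Qed.

Lemma red1_subst_l : forall (M M' : trm), red1 M M' -> forall N k, red1 (subst_rec N M k) (subst_rec N M' k).
Proof.
  induction 1; intros; simpl; try (constructor; auto).
  rewrite subst_subst0. constructor.
Qed.

Lemma red_refl : forall M : trm, red M M.
Proof. intros; apply rt_refl. Qed.
Lemma red_trans : forall M N P : trm, red M N -> red N P -> red M P.
Proof. intros; eapply rt_trans; eauto. Qed.
Lemma red_step : forall M N : trm, red1 M N -> red M N.
Proof. intros; apply rt_step; auto. Qed.

Lemma red_ctx : forall (f : trm -> trm), (forall M M', red1 M M' -> red1 (f M) (f M')) ->
  forall M M', red M M' -> red (f M) (f M').
Proof.
  intros f Hf M M' H. induction H.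
  - apply red_step; auto.
  - apply red_refl.
  - eapply red_trans; eauto.
Qed.

Lemma red_app : forall u u' v v' : trm, red u u' -> red v v' -> red (App u v) (App u' v').
Proof.
  intros. apply red_trans with (App u' v).
  - apply (red_ctx (fun x => App x v)); auto. intros; constructor; auto.
  - apply (red_ctx (fun x => App u' x)); auto. intros; constructor; auto.
Qed.
Lemma red_lam : forall u u' v v' : trm, red u u' -> red v v' -> red (Lam u v) (Lam u' v').
Proof.
  intros. apply red_trans with (Lam u' v).
  - apply (red_ctx (fun x => Lam x v)); auto. intros; constructor; auto.
  - apply (red_ctx (fun x => Lam u' x)); auto. intros; constructor; auto.
Qed.
Lemma red_pi : forall u u' v v' : trm, red u u' -> red v v' -> red (Pi u v) (Pi u' v').
Proof.
  intros. apply red_trans with (Pi u' v).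
  - apply (red_ctx (fun x => Pi x v)); auto. intros; constructor; auto.
  - apply (red_ctx (fun x => Pi u' x)); auto. intros; constructor; auto.
Qed.

Inductive par : trm -> trm -> Prop :=
  | par_srt : forall s, par (Srt s) (Srt s)
  | par_var : forall i, par (Var i) (Var i)
  | par_app : forall M M' N N', par M M' -> par N N' -> par (App M N) (App M' N')
  | par_lam : forall M M' N N', par M M' -> par N N' -> par (Lam M N) (Lam M' N')
  | par_pi : forall M M' N N', par M M' -> par N N' -> par (Pi M N) (Pi M' N')
  | par_beta : forall A M M' N N', par M M' -> par N N' -> par (App (Lam A M) N) (subst N' M').

Lemma par_refl : forall M, par M M.
Proof. induction M; constructor; auto. Qed.

Lemma red1_par : forall M N, red1 M N -> par M N.
Proof. induction 1; constructor; auto using par_refl. Qed.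

Lemma par_red : forall M N, par M N -> red M N.
Proof.
  induction 1; auto using red_refl, red_app, red_lam, red_pi.
  eapply red_trans. apply red_app. apply red_lam. apply red_refl. eauto. eauto.
  apply red_step; constructor.
Qed.

Lemma par_lift : forall M M', par M M' -> forall n k, par (lift_rec n k M) (lift_rec n k M').
Proof.
  induction 1; intros; simpl; try (constructor; auto).
  - apply par_refl.
  - rewrite subst0_lift. constructor; auto.
Qed.

Lemma par_subst : forall N N', par N N' -> forall M M', par M M' -> forall k,
  par (subst_rec N M k) (subst_rec N' M' k).
Proof.
  intros N N' HN. induction 1; intros; simpl; try (constructor; auto).
  - destruct (Nat.compare i k); try constructor. unfold lift. apply par_lift; auto.
  - rewrite subst_subst0. constructor; auto.
Qed.

Lemma par_lam_inv : forall A B X, par (Lam A B) X -> exists A' B', X = Lam A' B' /\ par A A' /\ par B B'.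
Proof. intros. inversion H; subst. eauto. Qed.

Lemma par_diamond : forall M M1, par M M1 -> forall M2, par M M2 -> exists M3, par M1 M3 /\ par M2 M3.
Proof.
  induction 1; intros M2 H2.
  - inversion H2; subst. exists (Srt s); split; constructor.
  - inversion H2; subst. exists (Var i); split; constructor.
  - inversion H2; subst.
    + destruct (IHpar1 _ H4) as (X & ? & ?). destruct (IHpar2 _ H6) as (Y & ? & ?).
      exists (App X Y); split; constructor; auto.
    + destruct (par_lam_inv H) as (A1 & B1 & -> & ? & ?).
      destruct (IHpar1 (Lam A M'0)) as (X & HX1 & HX2). constructor; auto. apply par_refl.
      destruct (par_lam_inv HX2) as (A3 & B3 & -> & ? & ?).
      inversion HX1; subst.
      destruct (IHpar2 _ H6) as (Y & ? & ?).
      exists (subst Y B3); split. constructor; auto. apply par_subst; auto.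
  - inversion H2; subst.
    destruct (IHpar1 _ H4) as (X & ? & ?). destruct (IHpar2 _ H6) as (Y & ? & ?).
    exists (Lam X Y); split; constructor; auto.
  - inversion H2; subst.
    destruct (IHpar1 _ H4) as (X & ? & ?). destruct (IHpar2 _ H6) as (Y & ? & ?).
    exists (Pi X Y); split; constructor; auto.
  - inversion H2; subst.
    + match goal with Hl : par (Lam _ _) _ |- _ => destruct (par_lam_inv Hl) as (A1 & B1 & -> & ? & ?) end.
      match goal with Hm : par M ?x |- _ => destruct (IHpar1 _ Hm) as (X & ? & ?) end.
      match goal with Hm : par N ?x |- _ => destruct (IHpar2 _ Hm) as (Y & ? & ?) end.
      exists (subst Y X); split. apply par_subst; auto. constructor; auto.
    + match goal with Hm : par M ?x |- _ => destruct (IHpar1 _ Hm) as (X & ? & ?) end.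
      match goal with Hm : par N ?x |- _ => destruct (IHpar2 _ Hm) as (Y & ? & ?) end.
      exists (subst Y X); split; apply par_subst; auto.
Qed.

Lemma strip : forall M M1, par M M1 -> forall M2, clos_refl_trans _ par M M2 ->
  exists M3, clos_refl_trans _ par M1 M3 /\ par M2 M3.
Proof.
  intros M M1 H M2 H2. revert M1 H. induction H2; intros.
  - destruct (par_diamond H0 H) as (X & ? & ?). exists X; split; auto. apply rt_step; auto.
  - exists M1; split; auto. apply rt_refl.
  - destruct (IHclos_refl_trans1 _ H) as (X & ? & ?).
    destruct (IHclos_refl_trans2 _ H1) as (Y & ? & ?).
    exists Y; split; auto. eapply rt_trans; eauto.
Qed.

Lemma par_star_red : forall M N, clos_refl_trans _ par M N -> red M N.
Proof. induction 1; eauto using par_red, red_refl, red_trans. Qed.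

Lemma red_par_star : forall M N, red M N -> clos_refl_trans _ par M N.
Proof. induction 1; eauto using rt_step, red1_par, rt_refl, rt_trans. Qed.

Lemma confluence : forall M M1 M2, red M M1 -> red M M2 -> exists M3, red M1 M3 /\ red M2 M3.
Proof.
  intros M M1 M2 H1 H2. apply red_par_star in H1. apply red_par_star in H2.
  revert M2 H2. induction H1; intros.
  - destruct (strip H H2) as (X & ? & ?). exists X; split.
    apply par_star_red; auto. apply par_red; auto.
  - exists M2; split; auto using red_refl. apply par_star_red; auto.
  - destruct (IHclos_refl_trans1 _ H2) as (X & HX1 & HX2).
    apply red_par_star in HX1.
    destruct (IHclos_refl_trans2 _ HX1) as (Y & ? & ?).
    exists Y; split; auto. eapply red_trans; eauto.
Qed.

Lemma church_rosser : forall M N, conv M N -> exists P, red M P /\ red N P.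
Proof.
  induction 1.
  - exists y; split; auto using red_step, red_refl.
  - exists x; split; apply red_refl.
  - destruct IHclos_refl_sym_trans as (P & ? & ?). eauto.
  - destruct IHclos_refl_sym_trans1 as (P & ? & ?).
    destruct IHclos_refl_sym_trans2 as (Q & ? & ?).
    destruct (confluence H2 H3) as (R & ? & ?).
    exists R; split; eapply red_trans; eauto.
Qed.

Lemma red_conv : forall M N, red M N -> conv M N.
Proof. induction 1; [apply rst_step | apply rst_refl | eapply rst_trans]; eauto. Qed.
Lemma conv_sym : forall M N, conv M N -> conv N M.
Proof. intros; apply rst_sym; auto. Qed.
Lemma conv_trans : forall M N P, conv M N -> conv N P -> conv M P.
Proof. intros; eapply rst_trans; eauto. Qed.
Lemma conv_refl : forall M, conv M M.
Proof. intros; apply rst_refl. Qed.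


Lemma conv_red_ctx : forall (f : trm -> trm), (forall M M', red1 M M' -> red (f M) (f M')) ->
  forall M M', conv M M' -> conv (f M) (f M').
Proof.
  intros f Hf. induction 1.
  - apply red_conv; auto.
  - apply conv_refl.
  - apply conv_sym; auto.
  - eapply conv_trans; eauto.
Qed.

Lemma conv_lift : forall M M' n k, conv M M' -> conv (lift_rec n k M) (lift_rec n k M').
Proof. intros. apply (conv_red_ctx (lift_rec n k)); auto. intros; apply red_step, red1_lift; auto. Qed.

Lemma conv_subst_l : forall M M' N k, conv M M' -> conv (subst_rec N M k) (subst_rec N M' k).
Proof. intros. apply (conv_red_ctx (fun x => subst_rec N x k)); auto. intros; apply red_step, red1_subst_l; auto. Qed.

Lemma red_subst_r : forall N N' M k, red N N' -> red (subst_rec N M k) (subst_rec N' M k).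
Proof.
  induction 1.
  - apply par_red. apply par_subst. apply red1_par; auto. apply par_refl.
  - apply red_refl.
  - eapply red_trans; eauto.
Qed.

Lemma conv_app_l : forall M M' N, conv M M' -> conv (App M N) (App M' N).
Proof. intros. apply (conv_red_ctx (fun x => App x N)); auto. intros; apply red_step; constructor; auto. Qed.

Lemma red_srt : forall s X, red (Srt s) X -> X = Srt s.
Proof.
  intros s X H. remember (Srt s) as Y. induction H; subst; auto.
  inversion H. rewrite IHclos_refl_trans2; auto.
Qed.

Lemma red_pi_inv : forall A B X, red (Pi A B) X -> exists A' B', X = Pi A' B' /\ red A A' /\ red B B'.
Proof.
  intros A B X H. remember (Pi A B) as Y. revert A B HeqY. induction H; intros; subst.
  - inversion H; subst; eauto 10 using red_step, red_refl.
  - eauto 10 using red_refl.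
  - destruct (IHclos_refl_trans1 _ _ eq_refl) as (A1 & B1 & -> & ? & ?).
    destruct (IHclos_refl_trans2 _ _ eq_refl) as (A2 & B2 & -> & ? & ?).
    eauto 10 using red_trans.
Qed.

Lemma conv_srt_inj : forall s s', conv (Srt s) (Srt s') -> s = s'.
Proof.
  intros. destruct (church_rosser H) as (P & H1 & H2).
  apply red_srt in H1; apply red_srt in H2. subst. inversion H2; auto.
Qed.

Lemma conv_pi_inj : forall A B A' B', conv (Pi A B) (Pi A' B') -> conv A A' /\ conv B B'.
Proof.
  intros. destruct (church_rosser H) as (P & H1 & H2).
  apply red_pi_inv in H1 as (A1 & B1 & -> & ? & ?).
  apply red_pi_inv in H2 as (A2 & B2 & E & ? & ?). inversion E; subst.
  split; (eapply conv_trans; [apply red_conv; eauto | apply conv_sym, red_conv; eauto]).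
Qed.

Lemma conv_srt_pi : forall s A B, conv (Srt s) (Pi A B) -> False.
Proof.
  intros. destruct (church_rosser H) as (P & H1 & H2).
  apply red_srt in H1. apply red_pi_inv in H2 as (? & ? & ? & _). congruence.
Qed.

End Red.
End MP2.
Import MP2.
Module MP3.
Set Implicit Arguments.

Section PTS.
Variable T : Type.
Variable ax : T -> T -> Prop.
Variable rl : T -> T -> T -> Prop.
Notation trm := (term T).
Notation ty := (typ ax rl).

Lemma lift1_lift : forall (A : trm) n, lift_rec 1 (S n) (lift 1 A) = lift 1 (lift_rec 1 n A).
Proof. intros. unfold lift. rewrite (permute_lift_rec A 1 n 1 0) by lia. auto. Qed.

Lemma subst_lift0 : forall (N X : trm), subst_rec N (lift 1 X) 0 = X.
Proof. intros. unfold lift. rewrite simpl_subst by lia. apply lift_rec0. Qed.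

Lemma subst_lift1 : forall (N X : trm) n, subst_rec N (lift 1 X) (S n) = lift 1 (subst_rec N X n).
Proof. intros. unfold lift. rewrite (commute_lift_subst N X 1 n 0) by lia. auto. Qed.

Lemma lift_lift : forall (A : trm) n, lift 1 (lift n A) = lift (S n) A.
Proof. intros. unfold lift. rewrite simpl_lift_rec by lia. auto. Qed.

Lemma weak0 : forall G M A C s, ty G M A -> ty G C (Srt s) -> ty (C :: G) (lift_rec 1 0 M) (lift_rec 1 0 A).
Proof. intros. eapply t_weak; eauto. Qed.

Inductive ins : nat -> list trm -> list trm -> Prop :=
  | ins0 : forall G C s, ty G C (Srt s) -> ins 0 G (C :: G)
  | insS : forall n G G' A, ins n G G' -> ins (S n) (A :: G) (lift_rec 1 n A :: G').

Lemma thinning : forall G M A, ty G M A -> forall n G', ins n G G' ->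
  ty G' (lift_rec 1 n M) (lift_rec 1 n A).
Proof.
  induction 1; intros n G' Hins.
  - inversion Hins; subst. eapply weak0; eauto. constructor; auto.
  - destruct n.
    + inversion Hins; subst. eapply weak0; eauto. econstructor; eauto.
    + inversion Hins; subst. rewrite lift1_lift. simpl.
      eapply t_start. apply (IHtyp _ _ H4).
  - destruct n.
    + inversion Hins; subst. eapply weak0; eauto. eapply t_weak; eauto.
    + inversion Hins; subst. rewrite !lift1_lift.
      eapply t_weak. apply (IHtyp1 _ _ H5). apply (IHtyp2 _ _ H5).
  - simpl. eapply t_prod; [apply (IHtyp1 _ _ Hins) | apply (IHtyp2 (S n)); constructor; auto | exact H1].
  - rewrite subst0_lift. econstructor. apply (IHtyp1 _ _ Hins). apply (IHtyp2 _ _ Hins).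
  - simpl. econstructor. apply (IHtyp1 (S n)). constructor; auto. apply (IHtyp2 _ _ Hins).
  - eapply t_conv. apply (IHtyp1 _ _ Hins). apply (IHtyp2 _ _ Hins). apply conv_lift; auto.
Qed.

Lemma weak1 : forall G M A C s, ty G M A -> ty G C (Srt s) -> ty (C :: G) (lift 1 M) (lift 1 A).
Proof. intros. eapply t_weak; eauto. Qed.

Inductive sb (N : trm) : nat -> list trm -> list trm -> Prop :=
  | sb0 : forall G B, ty G N B -> sb N 0 (B :: G) G
  | sbS : forall n G G' A, sb N n G G' -> sb N (S n) (A :: G) (subst_rec N A n :: G').

Lemma substitution : forall G M A, ty G M A -> forall N n G', sb N n G G' ->
  ty G' (subst_rec N M n) (subst_rec N A n).
Proof.
  induction 1; intros N0 n G' Hs.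
  - inversion Hs.
  - destruct n.
    + inversion Hs; subst. rewrite subst_lift0. simpl. unfold lift. rewrite lift_rec0. auto.
    + inversion Hs; subst. rewrite subst_lift1. simpl. eapply t_start. apply (IHtyp _ _ _ H4).
  - destruct n.
    + inversion Hs; subst. rewrite !subst_lift0. auto.
    + inversion Hs; subst. rewrite !subst_lift1. eapply t_weak.
      apply (IHtyp1 _ _ _ H5). apply (IHtyp2 _ _ _ H5).
  - simpl. eapply t_prod; [apply (IHtyp1 _ _ _ Hs) | apply (IHtyp2 _ (S n)); constructor; auto | exact H1].
  - rewrite subst_subst0. econstructor. apply (IHtyp1 _ _ _ Hs). apply (IHtyp2 _ _ _ Hs).
  - simpl. econstructor. apply (IHtyp1 _ (S n)). constructor; auto. apply (IHtyp2 _ _ _ Hs).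
  - eapply t_conv. apply (IHtyp1 _ _ _ Hs). apply (IHtyp2 _ _ _ Hs). apply conv_subst_l; auto.
Qed.

Lemma subst1 : forall G B M A N, ty (B :: G) M A -> ty G N B -> ty G (subst N M) (subst N A).
Proof. intros. eapply substitution; eauto. constructor; auto. Qed.

Lemma lift_inv_srt : forall (M : trm) n k s, lift_rec n k M = Srt s -> M = Srt s.
Proof. destruct M; simpl; intros; try discriminate; auto. destruct (k <=? n); discriminate. Qed.

Lemma lift_inv_var : forall (M : trm) i, lift 1 M = Var i -> exists j, M = Var j /\ i = S j.
Proof.
  destruct M; simpl; intros; try discriminate.
  exists n; split; auto. inversion H. lia.
Qed.

Lemma lift_inv_pi : forall (M : trm) n k A B, lift_rec n k M = Pi A B ->
  exists A0 B0, M = Pi A0 B0 /\ A = lift_rec n k A0 /\ B = lift_rec n (S k) B0.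
Proof. destruct M; simpl; intros; try discriminate. destruct (k <=? n); discriminate. inversion H; eauto. Qed.

Lemma lift_inv_lam : forall (M : trm) n k A B, lift_rec n k M = Lam A B ->
  exists A0 B0, M = Lam A0 B0 /\ A = lift_rec n k A0 /\ B = lift_rec n (S k) B0.
Proof. destruct M; simpl; intros; try discriminate. destruct (k <=? n); discriminate. inversion H; eauto. Qed.

Lemma lift_inv_app : forall (M : trm) n k A B, lift_rec n k M = App A B ->
  exists A0 B0, M = App A0 B0 /\ A = lift_rec n k A0 /\ B = lift_rec n k B0.
Proof. destruct M; simpl; intros; try discriminate. destruct (k <=? n); discriminate. inversion H; eauto. Qed.

Lemma ins1 : forall G A C s, ty G C (Srt s) -> ins 1 (A :: G) (lift 1 A :: C :: G).
Proof. intros. apply insS. econstructor; eauto. Qed.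

Lemma gen_srt : forall G s X, ty G (Srt s) X -> exists s', ax s s' /\ conv (Srt s') X.
Proof.
  intros G s X H. remember (Srt s) as Y. revert s HeqY. induction H; intros; try discriminate.
  - inversion HeqY; subst. eauto using conv_refl.
  - apply lift_inv_srt in HeqY. subst. destruct (IHtyp1 _ eq_refl) as (s' & ? & ?).
    exists s'; split; auto. apply (conv_lift 1 0) in H2. auto.
  - destruct (IHtyp1 _ HeqY) as (s' & ? & ?). eauto using conv_trans.
Qed.

Lemma gen_var : forall G i X, ty G (Var i) X -> exists A, nth_error G i = Some A /\ conv (lift (S i) A) X.
Proof.
  intros G i X H. remember (Var i) as Y. revert i HeqY. induction H; intros; try discriminate.
  - inversion HeqY; subst. exists A; split; auto using conv_refl.
  - apply lift_inv_var in HeqY as (j & -> & ->). destruct (IHtyp1 _ eq_refl) as (A & ? & ?).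
    exists A; split; auto. rewrite <- lift_lift. apply conv_lift; auto.
  - destruct (IHtyp1 _ HeqY) as (A0 & ? & ?). eauto using conv_trans.
Qed.

Lemma gen_pi : forall G A B X, ty G (Pi A B) X -> exists s1 s2 s3,
  ty G A (Srt s1) /\ ty (A :: G) B (Srt s2) /\ rl s1 s2 s3 /\ conv (Srt s3) X.
Proof.
  intros G A B X H. remember (Pi A B) as Y. revert A B HeqY. induction H; intros; try discriminate.
  - apply lift_inv_pi in HeqY as (A0 & B1 & -> & -> & ->).
    destruct (IHtyp1 _ _ eq_refl) as (s1 & s2 & s3 & HA & HB & Hr & Hc).
    exists s1, s2, s3; split; [|split; [|split]]; auto.
    + apply (thinning HA (ins0 H0)).
    + apply (thinning HB (ins1 A0 H0)).
    + apply (conv_lift 1 0) in Hc. auto.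
  - inversion HeqY; subst. exists s1, s2, s3; eauto using conv_refl.
  - destruct (IHtyp1 _ _ HeqY) as (s1 & s2 & s3 & ? & ? & ? & ?). exists s1, s2, s3; eauto 10 using conv_trans.
Qed.

Lemma gen_lam : forall G A M X, ty G (Lam A M) X -> exists B s,
  ty (A :: G) M B /\ ty G (Pi A B) (Srt s) /\ conv (Pi A B) X.
Proof.
  intros G A M X H. remember (Lam A M) as Y. revert A M HeqY. induction H; intros; try discriminate.
  - apply lift_inv_lam in HeqY as (A0 & B0 & -> & -> & ->).
    destruct (IHtyp1 _ _ eq_refl) as (B1 & s1 & HM & HP & Hc).
    exists (lift_rec 1 1 B1), s1; split; [|split].
    + apply (thinning HM (ins1 A0 H0)).
    + apply (thinning HP (ins0 H0)).
    + apply (conv_lift 1 0) in Hc. auto.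
  - inversion HeqY; subst. exists B, s; eauto using conv_refl.
  - destruct (IHtyp1 _ _ HeqY) as (B1 & s1 & ? & ? & ?). exists B1, s1; eauto 10 using conv_trans.
Qed.

Lemma gen_app : forall G M N X, ty G (App M N) X -> exists A B,
  ty G M (Pi A B) /\ ty G N A /\ conv (subst N B) X.
Proof.
  intros G M N X H. remember (App M N) as Y. revert M N HeqY. induction H; intros; try discriminate.
  - apply lift_inv_app in HeqY as (A0 & B0 & -> & -> & ->).
    destruct (IHtyp1 _ _ eq_refl) as (A1 & B1 & HM & HN & Hc).
    exists (lift 1 A1), (lift_rec 1 1 B1); split; [|split].
    + apply (thinning HM (ins0 H0)).
    + apply (thinning HN (ins0 H0)).
    + apply (conv_lift 1 0) in Hc. unfold subst in Hc. rewrite lift_subst_gt in Hc by lia. auto.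
  - inversion HeqY; subst. exists A, B; eauto using conv_refl.
  - destruct (IHtyp1 _ _ HeqY) as (A1 & B1 & ? & ? & ?). exists A1, B1; eauto 10 using conv_trans.
Qed.

Lemma type_correct : forall G M A, ty G M A -> (exists s, A = Srt s) \/ (exists s, ty G A (Srt s)).
Proof.
  induction 1.
  - left; eauto.
  - right. exists s. apply (weak1 H H).
  - destruct IHtyp1 as [(s1 & ->) | (s1 & ?)].
    + left; exists s1; reflexivity.
    + right. exists s1. apply (weak1 H1 H0).
  - left; eauto.
  - destruct IHtyp1 as [(s1 & E) | (s1 & ?)]. discriminate.
    apply gen_pi in H1 as (s2 & s3 & s4 & ? & ? & ? & ?).
    right. exists s3. apply (subst1 H2 H0).
  - right; eauto.
  - right; eauto.
Qed.

Lemma pi_body_typ : forall G M A B N, ty G M (Pi A B) -> ty G N A -> exists s, ty G (subst N B) (Srt s).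
Proof.
  intros. destruct (type_correct H) as [(s & E) | (s & H1)]. discriminate.
  apply gen_pi in H1 as (s2 & s3 & s4 & ? & ? & ? & ?).
  exists s3. apply (subst1 H2 H0).
Qed.

Inductive red1c : list trm -> list trm -> Prop :=
  | rc_hd : forall A A' G, red1 A A' -> red1c (A :: G) (A' :: G)
  | rc_tl : forall A G G', red1c G G' -> red1c (A :: G) (A :: G').

Lemma red1_lift_inv : forall (M : trm) n k X, red1 (lift_rec n k M) X ->
  exists M', red1 M M' /\ X = lift_rec n k M'.
Proof.
  induction M; intros n0 k X H; simpl in H.
  - inversion H.
  - destruct (k <=? n); inversion H.
  - inversion H; subst.
    + apply eq_sym, lift_inv_lam in H1 as (A0 & B0 & -> & -> & ->).
      exists (subst M2 B0). split. constructor. rewrite subst0_lift. auto.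
    + destruct (IHM1 _ _ _ H3) as (Y & ? & ->). exists (App Y M2); split; auto. constructor; auto.
    + destruct (IHM2 _ _ _ H3) as (Y & ? & ->). exists (App M1 Y); split; auto. constructor; auto.
  - inversion H; subst.
    + destruct (IHM1 _ _ _ H3) as (Y & ? & ->). exists (Lam Y M2); split; auto. constructor; auto.
    + destruct (IHM2 _ _ _ H3) as (Y & ? & ->). exists (Lam M1 Y); split; auto. constructor; auto.
  - inversion H; subst.
    + destruct (IHM1 _ _ _ H3) as (Y & ? & ->). exists (Pi Y M2); split; auto. constructor; auto.
    + destruct (IHM2 _ _ _ H3) as (Y & ? & ->). exists (Pi M1 Y); split; auto. constructor; auto.
Qed.

Lemma sr1 : forall G M A, ty G M A ->
  (forall M', red1 M M' -> ty G M' A) /\ (forall G', red1c G G' -> ty G' M A).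
Proof.
  induction 1.
  - split; intros. inversion H0. inversion H0.
  - destruct IHtyp as [IHa IHb]. split; intros.
    + inversion H0.
    + inversion H0; subst.
      * eapply t_conv. eapply t_start. apply (IHa _ H4).
        apply (weak1 H (IHa _ H4)).
        apply conv_sym, red_conv, red_step. apply red1_lift; auto.
      * eapply t_start. apply (IHb _ H4).
  - destruct IHtyp1 as [IH1a IH1b]. destruct IHtyp2 as [IH2a IH2b]. split; intros.
    + apply red1_lift_inv in H1 as (M1 & ? & ->). eapply t_weak; eauto.
    + inversion H1; subst.
      * eapply t_weak; eauto.
      * eapply t_weak; eauto.
  - destruct IHtyp1 as [IH1a IH1b]. destruct IHtyp2 as [IH2a IH2b]. split; intros.
    + inversion H2; subst.
      * econstructor; eauto. apply IH2b. constructor; auto.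
      * econstructor; eauto.
    + econstructor; eauto. apply IH2b. constructor; auto.
  - destruct IHtyp1 as [IH1a IH1b]. destruct IHtyp2 as [IH2a IH2b].
    rename H into HMt. rename H0 into HNt.
    destruct (pi_body_typ HMt HNt) as (s' & Hs').
    split.
    + intros M0 Hred. inversion Hred; subst.
      * destruct (gen_lam HMt) as (B0 & s & HM & HP & HC).
        apply conv_pi_inj in HC as [HA HB].
        destruct (gen_pi HP) as (s1 & s2 & s3 & HA0 & _ & _ & _).
        eapply t_conv. apply (subst1 HM). eapply t_conv. exact HNt. exact HA0.
        apply conv_sym; exact HA. exact Hs'. apply conv_subst_l; exact HB.
      * eapply t_app; eauto.
      * eapply t_conv. eapply t_app. exact HMt. apply IH2a; eassumption. exact Hs'.
        apply conv_sym, red_conv, red_subst_r, red_step; assumption.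
    + intros. eapply t_app; eauto.
  - destruct IHtyp1 as [IH1a IH1b]. destruct IHtyp2 as [IH2a IH2b]. split; intros.
    + inversion H1; subst.
      * assert (ty G (Pi A' B) (Srt s)) by (apply IH2a; constructor; auto).
        eapply t_conv. econstructor. apply IH1b. constructor; auto. eauto. eauto.
        apply conv_sym, red_conv, red_step. constructor; auto.
      * econstructor; eauto.
    + econstructor; eauto. apply IH1b. constructor; auto.
  - destruct IHtyp1 as [IH1a IH1b]. destruct IHtyp2 as [IH2a IH2b]. split; intros.
    + eapply t_conv; eauto.
    + eapply t_conv; eauto.
Qed.

Lemma sr_red : forall G M M' A, red M M' -> ty G M A -> ty G M' A.
Proof.
  intros G M M' A H. induction H; intros; auto.
  apply (proj1 (sr1 H0)); auto.
Qed.

Lemma uniq (axf : forall s a b, ax s a -> ax s b -> a = b)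
  (rlf : forall a b c c', rl a b c -> rl a b c' -> c = c') :
  forall M G T1 T2, ty G M T1 -> ty G M T2 -> conv T1 T2.
Proof.
  induction M; intros G T1 T2 H1 H2.
  - apply gen_srt in H1 as (a & Ha & Hc1). apply gen_srt in H2 as (b & Hb & Hc2).
    rewrite (axf _ _ _ Ha Hb) in Hc1. eapply conv_trans; [apply conv_sym|]; eauto.
  - apply gen_var in H1 as (a & Ha & Hc1). apply gen_var in H2 as (b & Hb & Hc2).
    rewrite Ha in Hb. inversion Hb; subst. eapply conv_trans; [apply conv_sym|]; eauto.
  - apply gen_app in H1 as (A1 & B1 & HM1 & HN1 & Hc1). apply gen_app in H2 as (A2 & B2 & HM2 & HN2 & Hc2).
    destruct (conv_pi_inj (IHM1 _ _ _ HM1 HM2)) as [_ HB].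
    eapply conv_trans; [apply conv_sym; exact Hc1|]. eapply conv_trans; [|exact Hc2].
    apply conv_subst_l; auto.
  - apply gen_lam in H1 as (B1 & s1 & HM1 & _ & Hc1). apply gen_lam in H2 as (B2 & s2 & HM2 & _ & Hc2).
    eapply conv_trans; [apply conv_sym; exact Hc1|]. eapply conv_trans; [|exact Hc2].
    apply (conv_red_ctx (fun x => Pi M1 x)); [|eauto].
    intros; apply red_step; constructor; auto.
  - apply gen_pi in H1 as (a1 & a2 & a3 & HA1 & HB1 & Hr1 & Hc1).
    apply gen_pi in H2 as (b1 & b2 & b3 & HA2 & HB2 & Hr2 & Hc2).
    pose proof (conv_srt_inj (IHM1 _ _ _ HA1 HA2)) as E1.
    pose proof (conv_srt_inj (IHM2 _ _ _ HB1 HB2)) as E2. subst.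
    rewrite (rlf _ _ _ _ Hr1 Hr2) in Hc1. eapply conv_trans; [apply conv_sym|]; eauto.
Qed.

End PTS.
End MP3.
Import MP3.
Module MP4.

Section Star.
Variable Sp : spec.
Hypothesis HS : functional Sp.

Lemma star_ax_fun : forall x a b, axStar Sp x a -> axStar Sp x b -> a = b.
Proof.
  destruct HS as [Hax _].
  intros x a b [H1 | (E1 & c1 & Ex1 & Ht1)] [H2 | (E2 & c2 & Ex2 & Ht2)]; subst.
  - destruct x, a, b; simpl in *; try contradiction. f_equal; eauto.
  - destruct a; simpl in H1; try contradiction. exfalso; apply Ht2; eauto.
  - destruct b; simpl in H2; try contradiction. exfalso; apply Ht1; eauto.
  - auto.
Qed.

Lemma star_rl_fun : forall x y a b, rlStar Sp x y a -> rlStar Sp x y b -> a = b.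
Proof.
  destruct HS as [_ Hrl].
  intros x y a b [H1 | (E1 & N1)] [H2 | (E2 & N2)]; subst.
  - destruct x, y, a, b; simpl in *; try contradiction. f_equal; eauto.
  - destruct a; simpl in H1; [|destruct x, y; contradiction].
    exfalso; apply N2; eauto.
  - destruct b; simpl in H2; [|destruct x, y; contradiction].
    exfalso; apply N1; eauto.
  - auto.
Qed.

Lemma srt_tau_untyp : forall G X A, typStar Sp G X A -> X = Srt tau -> False.
Proof.
  unfold typStar. induction 1; intros E; try discriminate.
  - inversion E; subst. destruct H as [H | (_ & a & Ea & _)]. exact H. discriminate.
  - apply lift_inv_srt in E. auto.
  - auto.
Qed.

Lemma var_not_tau : forall G i, typStar Sp G (Var i) (Srt tau) -> False.
Proof.
  unfold typStar. intros G i H. remember (Var i) as X. remember (Srt tau) as Y.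
  revert i HeqX HeqY. induction H; intros; try discriminate.
  - unfold lift in HeqY. apply lift_inv_srt in HeqY. subst. eapply srt_tau_untyp; eauto.
  - unfold lift in HeqY. apply lift_inv_srt in HeqY. apply lift_inv_var in HeqX as (j & -> & ->).
    eapply IHtyp1; eauto.
  - subst. eapply srt_tau_untyp; eauto.
Qed.

Fixpoint mu (G : list (cterm Sp)) (A : cterm Sp) : nat :=
  match A with
  | Pi B C => 1 + (if excluded_middle_informative (typStar Sp (B :: G) C (Srt tau))
                   then mu (B :: G) C else 0)
  | _ => 0
  end.

Lemma uniqS : forall G M T1 T2, typStar Sp G M T1 -> typStar Sp G M T2 -> conv T1 T2.
Proof. intros. eapply uniq; eauto. exact star_ax_fun. exact star_rl_fun. Qed.

Lemma mu_subst : forall X n N G G', sb (axStar Sp) (rlStar Sp) N n G G' ->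
  typStar Sp G X (Srt tau) -> mu G' (subst_rec N X n) = mu G X.
Proof.
  induction X; intros n0 N G G' Hsb H; simpl; auto.
  - destruct (Nat.compare n n0) eqn:E; simpl; auto.
    apply Nat.compare_eq in E. subst. exfalso; eapply var_not_tau; eauto.
  - destruct (gen_pi H) as (s1 & s2 & s3 & HA & HB & Hr & Hc).
    assert (HB' := substitution HB (sbS X1 Hsb)). simpl in HB'.
    destruct (excluded_middle_informative (typStar Sp (subst_rec N X1 n0 :: G') (subst_rec N X2 (S n0)) (Srt tau))) as [h1|h1];
    destruct (excluded_middle_informative (typStar Sp (X1 :: G) X2 (Srt tau))) as [h2|h2].
    + f_equal. eapply IHX2; eauto. apply sbS; auto.
    + exfalso. apply h2. pose proof (conv_srt_inj (uniqS _ _ _ _ HB' h1)). subst; auto.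
    + exfalso. apply h1. apply (substitution h2 (sbS X1 Hsb)).
    + auto.
Qed.

Lemma main_step (P : list (cterm Sp) -> cterm Sp -> cterm Sp -> Prop)
  (HP : is_reducibility Sp P) :
  forall n G M M' A, (typStar Sp G A (Srt tau) -> mu G A <= n) ->
  P G M A -> typStar Sp G M' A -> conv M M' -> P G M' A.
Proof.
  intro n. induction n as [n IH] using lt_wf_ind.
  intros G M M' A Hmu HPM HM' Hc.
  apply HP in HPM. destruct HPM as (HWF & HtM & s & HAs & H1 & H2).
  apply HP. split; [auto|split; [auto|]]. exists s. split; [auto|split].
  - intro Hcase. destruct (H1 Hcase) as (M0 & A0 & Hr & HrA & Ht).
    assert (Hc0 : conv M0 M') by (eapply conv_trans; [apply conv_sym, red_conv; exact Hr | exact Hc]).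
    destruct (church_rosser Hc0) as (M1 & Hr1 & Hr2).
    exists M1, A0. split; [exact Hr2 | split; [exact HrA|]].
    exact (sr_red Hr1 Ht).
  - intros Hs B C HA N HN. subst s. subst A.
    pose proof (proj1 (HP G N B) HN) as (_ & HtN & _).
    specialize (H2 eq_refl B C eq_refl N HN).
    destruct (gen_pi HAs) as (s1 & s2 & s3 & HB & HC & Hr & Hc3).
    assert (Hmu0 := Hmu HAs). simpl in Hmu0.
    apply (IH (n - 1)) with (M := App M N).
    + lia.
    + intro Hsub. assert (HCs := subst1 HC HtN). simpl in HCs.
      pose proof (conv_srt_inj (uniqS _ _ _ _ HCs Hsub)). subst s2.
      unfold subst; rewrite (mu_subst C _ _ _ _ (sb0 HtN) HC).
      destruct (excluded_middle_informative (typStar Sp (B :: G) C (Srt tau))); [lia | contradiction].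
    + exact H2.
    + eapply t_app; eauto.
    + apply conv_app_l; auto.
Qed.

End Star.


End MP4.
Import MP4.

Theorem lemma5p19 (S : spec) (HS : functional S)
  (P : list (cterm S) -> cterm S -> cterm S -> Prop)
  (HP : is_reducibility S P)
  (G : list (cterm S)) (M M' A : cterm S) :
  P G M A -> typStar S G M' A -> conv M M' -> P G M' A.
Proof.
  intros. eapply (main_step S HS P HP (mu S G A)); eauto.
Qed.
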